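(* Let $r\geqslant 3$ be an odd integer and let $\Gamma\cong\mathbb{Z}_{2r}\oplus\mathbb{Z}_2\oplus\mathbb{Z}_2\oplus\mathbb{Z}_2$. Then there exists an $\mathrm{MRS}_\Gamma(r,8;2)$ in which every row sum and every column sum equals $0_\Gamma$.
   Context: For an abelian group $\Gamma$ of order $abc$, an $\mathrm{MRS}_\Gamma(a,b;c)$ is a collection of $c$ arrays of size $a\times b$ whose entries are the elements of $\Gamma$, each appearing exactly once and in a unique array, such that there are $\omega,\delta\in\Gamma$ with every row sum (in every array) equal to $\omega$ and every column sum (in every array) equal to $\delta$. *)

(* Defs.v *)
From HB Require Import structures.
From mathcomp Require Import all_boot all_order all_algebra.
Set Implicit Arguments. Unset Strict Implicit. Unset Printing Implicit Defensive.
Import GRing.Theory.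
Local Open Scope ring_scope.

(* An MRS_G(a,b;c): c arrays of size a x b, i.e. a map
   A : (array index, row, column) -> G, bijective (each element of G
   appears exactly once, in a unique array), with every row sum equal to
   omega and every column sum equal to delta. *)
Definition is_MRS (G : finZmodType) (a b c : nat)
    (A : 'I_c -> 'I_a -> 'I_b -> G) (omega delta : G) : Prop :=
  bijective (fun t : 'I_c * 'I_a * 'I_b => A t.1.1 t.1.2 t.2) /\
  (forall (k : 'I_c) (i : 'I_a), \sum_(j < b) A k i j = omega) /\
  (forall (k : 'I_c) (j : 'I_b), \sum_(i < a) A k i j = delta).

Definition MRS_exists (G : finZmodType) (a b c : nat) : Prop :=
  exists A omega delta, @is_MRS G a b c A omega delta.

Definition Gamma (r : nat) : Type :=
  ('Z_(2 * r) * 'Z_2 * 'Z_2 * 'Z_2)%type.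

(* Main.v *)
Require Import Defs.
From HB Require Import structures.
From mathcomp Require Import all_boot all_order all_algebra.
From mathcomp Require Import zify.
Import GRing.Theory Num.Theory.
Local Open Scope ring_scope.

Definition W := ('Z_2 * 'Z_2 * 'Z_2 * 'Z_2)%type.
Definition bitn (n i : nat) : 'Z_2 := (nat_of_bool (odd (n %/ 2 ^ i)))%:R.
Definition dec (n : nat) : W := (bitn n 3, bitn n 0, bitn n 1, bitn n 2).
Definition dtab (n : nat) : nat :=
  nth 0%N [:: 4;6;7;5;8;12;9;13;0;10;1;11;2;15;3;14]%N n.
Definition epsb (n : nat) : bool :=
  nth false [:: true;true;false;false;true;false;true;false;
                true;true;true;true;false;false;false;false] n.
Definition eps (n : nat) : int := if epsb n then 1 else -1.

Definition I16 := iota 0 16.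
Lemma F1 : all (fun n => all (fun m => (dec n == dec m) ==> (n == m)) I16) I16.
Proof. by vm_compute. Qed.
Lemma F2 : all (fun n => all (fun m => (dec (dtab n) == dec (dtab m)) ==> (n == m)) I16) I16.
Proof. by vm_compute. Qed.
Lemma F0 : all (fun n => all (fun m => (dec n + dec (dtab n) == dec m + dec (dtab m)) ==> (n == m)) I16) I16.
Proof. by vm_compute. Qed.
Lemma F3 : all (fun n => all (fun m => ~~ ((epsb n == ~~ epsb m) && (dec n == dec (dtab m)))) I16) I16.
Proof. by vm_compute. Qed.
Lemma S1 (k : nat) : (k < 2)%N -> \sum_(j < 8) eps (8 * k + j) = 0.
Proof. by case: k => [|[|]] // _; rewrite !big_ord_recr big_ord0. Qed.
Lemma S2 (k : nat) : (k < 2)%N -> \sum_(j < 8) dec (8 * k + j) = 0.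
Proof. case: k => [|[|]] // _; rewrite !big_ord_recr big_ord0 /=; apply/eqP; by vm_compute. Qed.
Lemma S3 (k : nat) : (k < 2)%N -> \sum_(j < 8) dec (dtab (8 * k + j)) = 0.
Proof. case: k => [|[|]] // _; rewrite !big_ord_recr big_ord0 /=; apply/eqP; by vm_compute. Qed.
Definition Yn (n i : nat) : int * W :=
  if i == 0%N then (0, dec n + dec (dtab n))
  else if i == 1%N then (eps n, dec n)
  else if i == 2%N then (- eps n, dec (dtab n))
  else ((-1) ^+ (odd (i - 3)) * ((i - 3)./2 + 2)%:Z * eps n, dec n).
Definition Xn (k i j : nat) : int * W := Yn (8 * k + j)%N i.

Lemma pair_sum (I : finType) (F : I -> int * W) :
  \sum_i F i = (\sum_i (F i).1, \sum_i (F i).2).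
Proof.
rewrite [LHS]surjective_pairing.
by rewrite (big_morph fst (id1:=0) (op1:=+%R)) // (big_morph snd (id1:=0) (op1:=+%R)).
Qed.

Lemma row_sum (k i : nat) : (k < 2)%N -> \sum_(j < 8) Xn k i j = 0.
Proof.
move=> hk; rewrite pair_sum /Xn /Yn.
case: (i == 0%N) => /=.
  by rewrite big1 // big_split /= S2 // S3 // addr0.
case: (i == 1%N) => /=; first by rewrite S1 // S2.
case: (i == 2%N) => /=; first by rewrite sumrN S1 // S3 // oppr0.
by rewrite -mulr_sumr S1 // mulr0 S2.
Qed.

Lemma Wdbl (x : W) : x + x = 0.
Proof.
have h : forall b : 'Z_2, b + b = 0.
  by case=> [[|[|n]] hn] //; apply/val_inj.
case: x => [[[a b] c] d].
by change ((a+a, b+b, c+c, d+d) = (0,0,0,0) :> W); rewrite !h.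
Qed.

Lemma pair0 (k j m : nat) : Xn k (m.*2.+3) j + Xn k (m.*2.+4) j = 0.
Proof.
rewrite /Xn /Yn /=.
have -> : (m.*2.+3 - 3 = m.*2)%N by lia.
rewrite odd_double /= uphalf_double doubleK expr0 expr1 mul1r mulN1r.
change ((((m + 2)%:Z * eps (8 * k + j)) + (- ((m + 2)%:Z) * eps (8 * k + j)), dec (8 * k + j) + dec (8 * k + j)) = (0, 0)).
by rewrite Wdbl mulNr subrr.
Qed.

Lemma col_aux (k j m : nat) : \sum_(0 <= i < 3 + m.*2) Xn k i j = 0.
Proof.
elim: m => [|m IH].
  rewrite /index_iota /= !big_cons big_nil /Xn /Yn /= addr0.
  change ((0 + (eps (8 * k + j) + - eps (8 * k + j)), (dec (8 * k + j) + dec (dtab (8 * k + j))) + (dec (8 * k + j) + dec (dtab (8 * k + j)))) = (0, 0)).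
  by rewrite subrr addr0 Wdbl.
rewrite doubleS !addnS big_nat_recr //= big_nat_recr //= IH add0r.

by rewrite (_ : (3 + m.*2) = m.*2.+3)%N // pair0.
Qed.

Lemma col_sum (k j r : nat) : (3 <= r)%N -> odd r -> \sum_(i < r) Xn k i j = 0.
Proof.
move=> h3 ho.
have -> : r = (3 + (r - 3)./2.*2)%N.
  rewrite halfK oddB // ho /=; lia.
by rewrite -(big_mkord xpredT (fun i => Xn k i j)) col_aux.
Qed.

Lemma Z2cases (b : 'Z_2) : b = 0 \/ b = 1.
Proof. by case: b => [[|[|n]] hn] //; [left|right]; apply/val_inj. Qed.

Definition Emb (r : nat) (x : int * W) : Gamma r :=
  (((2 * x.1)%:~R + (r * (x.2.1.1.1 : nat))%N%:R, x.2.1.1.2), x.2.1.2, x.2.2).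

Lemma EmbD (r : nat) : (0 < r)%N -> {morph Emb r : x y / x + y}.
Proof.
move=> hr [z1 [[[b1 a1] c1] d1]] [z2 [[[b2 a2] c2] d2]].
rewrite /Emb /=.
change (((2 * (z1 + z2))%:~R + (r * nat_of_ord (b1 + b2)%R)%N%:R, a1 + a2, c1 + c2, d1 + d2)
  = (((2 * z1)%:~R + (r * b1)%N%:R) + ((2 * z2)%:~R + (r * b2)%N%:R), a1 + a2, c1 + c2, d1 + d2) :> Gamma r).
congr (_, _, _, _).
rewrite mulrDr intrD addrACA; congr (_ + _).
have c0 : ((2 * r)%N%:R : 'Z_(2 * r)) = 0 by apply: pchar_Zp; lia.
by case: (Z2cases b1) => ->; case: (Z2cases b2) => -> /=;
  rewrite ?muln0 ?muln1 ?addr0 ?add0r // -natrD addnn -mul2n c0.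
Qed.

Lemma Emb0 (r : nat) : Emb r 0 = 0.
Proof. by rewrite /Emb /= muln0 mulr0 addr0. Qed.

Lemma Emb_sum (r : nat) (I : finType) (F : I -> int * W) : (0 < r)%N ->
  Emb r (\sum_i F i) = \sum_i Emb r (F i).
Proof. by move=> hr; rewrite (big_morph (Emb r) (EmbD r hr) (Emb0 r)). Qed.

Lemma Zp_int0 (r : nat) (x : int) : (0 < r)%N -> (x%:~R : 'Z_(2 * r)) = 0 ->
  exists q : nat, `|x|%N = (2 * r * q)%N.
Proof.
move=> hr.
have key : forall n : nat, (n%:R : 'Z_(2 * r)) = 0 -> exists q : nat, n = (2 * r * q)%N.
  move=> n /(congr1 val); rewrite Zp_nat /= Zp_cast; last by lia.
  move=> h; exists (n %/ (2 * r))%N; rewrite mulnC divnK //; exact/eqP.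
case: x => n /=.
  by move=> /key.
by rewrite NegzE mulrNz => /eqP; rewrite oppr_eq0 => /eqP /key.
Qed.

Lemma EmbI (r : nat) (x y : int * W) : (3 <= r)%N -> odd r ->
  - (r%:Z) < 2 * x.1 < r%:Z -> - (r%:Z) < 2 * y.1 < r%:Z ->
  Emb r x = Emb r y -> x = y.
Proof.
move=> h3 ho; case: x => [z1 [[[b1 a1] c1] d1]]; case: y => [z2 [[[b2 a2] c2] d2]] /=.
move=> /andP[l1 u1] /andP[l2 u2] EQ.
have E := congr1 (fun g : Gamma r => g.1.1.1) EQ.
move: (congr1 (fun g : Gamma r => g.1.1.2) EQ) => /= <-.
move: (congr1 (fun g : Gamma r => g.1.2) EQ) => /= <-.
move: (congr1 (fun g : Gamma r => g.2) EQ) => /= <-.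
rewrite /= in E.
have [h hh] : exists h, r = h.*2.+1.
  by exists r./2; rewrite -{1}(odd_double_half r) ho.
have n2i : forall n : nat, (n%:R : 'Z_(2 * r)) = (n%:Z)%:~R by [].
have E' : ((2 * z1 + (r * b1)%N%:Z) - (2 * z2 + (r * b2)%N%:Z))%:~R = 0 :> 'Z_(2 * r).
  by rewrite intrB !intrD -!n2i E subrr.
have hr0 : (0 < r)%N by lia.
have [q] := Zp_int0 r _ hr0 E'.
case: (Z2cases b1) => ->; case: (Z2cases b2) => -> /=; rewrite ?muln0 ?muln1 => hq.
- have -> : z1 = z2; last by [].
  clear EQ E E' n2i; case: q hq => [|q] hq; first by rewrite muln0 in hq; lia.
  have : (2 * r <= 2 * r * q.+1)%N by rewrite leq_pmulr.
  lia.
- exfalso; clear EQ E E' n2i; rewrite -mulnA in hq; move: hq; set m := (r * q)%N; lia.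
- exfalso; clear EQ E E' n2i; rewrite -mulnA in hq; move: hq; set m := (r * q)%N; lia.
- have -> : z1 = z2; last by [].
  clear EQ E E' n2i; case: q hq => [|q] hq; first by rewrite muln0 in hq; lia.
  have : (2 * r <= 2 * r * q.+1)%N by rewrite leq_pmulr.
  lia.
Qed.

Lemma memI16 n : (n < 16)%N -> n \in I16.
Proof. by rewrite /I16 mem_iota. Qed.

Lemma F1' n m : (n < 16)%N -> (m < 16)%N -> dec n = dec m -> n = m.
Proof.
move=> /memI16 hn /memI16 hm e; move/allP: F1 => /(_ n hn) /allP /(_ m hm).
by rewrite e eqxx => /eqP.
Qed.
Lemma F2' n m : (n < 16)%N -> (m < 16)%N -> dec (dtab n) = dec (dtab m) -> n = m.
Proof.
move=> /memI16 hn /memI16 hm e; move/allP: F2 => /(_ n hn) /allP /(_ m hm).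
by rewrite e eqxx => /eqP.
Qed.
Lemma F0' n m : (n < 16)%N -> (m < 16)%N ->
  dec n + dec (dtab n) = dec m + dec (dtab m) -> n = m.
Proof.
move=> /memI16 hn /memI16 hm e; move/allP: F0 => /(_ n hn) /allP /(_ m hm).
by rewrite e eqxx => /eqP.
Qed.
Lemma F3' n m : (n < 16)%N -> (m < 16)%N ->
  epsb n = ~~ epsb m -> dec n = dec (dtab m) -> False.
Proof.
move=> /memI16 hn /memI16 hm e1 e2; move/allP: F3 => /(_ n hn) /allP /(_ m hm).
by rewrite e1 e2 !eqxx.
Qed.

Lemma Yn_ge3 n i : (3 <= i)%N ->
  Yn n i = ((-1) ^+ odd (i - 3) * ((i - 3)./2 + 2)%:Z * eps n, dec n).
Proof. by rewrite /Yn; case: i => [|[|[|i]]]. Qed.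

Lemma Yn_bound n i r : odd r -> (3 <= r)%N -> (i < r)%N ->
  - (r%:Z) < 2 * (Yn n i).1 < r%:Z.
Proof.
move=> ho h3 hi.
have [h hh] : exists h, r = h.*2.+1.
  by exists r./2; rewrite -{1}(odd_double_half r) ho.
have cls : i = 0%N \/ i = 1%N \/ i = 2%N \/ (3 <= i)%N by lia.
case: cls => [->|[->|[->|h3i]]]; last rewrite Yn_ge3 //; rewrite /= /eps.
- apply/andP; split; lia.
- case: epsb; apply/andP; split; lia.
- case: epsb; apply/andP; split; lia.
have d1 := odd_double_half (i - 3).
move: d1; case: (odd (i - 3)); case: (epsb n);
  rewrite ?expr0 ?expr1 ?mul1r ?mulN1r ?mulr1 ?mulrN1 ?opprK => d1;
  apply/andP; split; lia.
Qed.

Lemma YnI n m i i' : (n < 16)%N -> (m < 16)%N -> Yn n i = Yn m i' -> n = m /\ i = i'.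
Proof.
move=> hn hm EQ.
have e1 := congr1 fst EQ; have e2 := congr1 snd EQ; clear EQ.
have cls : forall i, i = 0%N \/ i = 1%N \/ i = 2%N \/ (3 <= i)%N by move=> x; lia.
have d1 := odd_double_half (i - 3).
have d2 := odd_double_half (i' - 3).
case: (cls i) => [Ei|[Ei|[Ei|hi]]]; case: (cls i') => [Ei'|[Ei'|[Ei'|hi']]];
  rewrite ?Ei ?Ei' in e1 e2 *;
  try rewrite (Yn_ge3 _ _ hi) in e1 e2; try rewrite (Yn_ge3 _ _ hi') in e1 e2;
  rewrite /Yn /= in e1 e2.
all: try solve [exfalso; move: e1 d1 d2; rewrite /eps; case: (epsb n); case: (epsb m);
  case: (odd (i - 3)); case: (odd (i' - 3)); rewrite /=;
  rewrite ?expr0 ?expr1 ?mul1r ?mulN1r ?mulr1 ?mulrN1 ?opprK => e1 d1 d2; lia].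
- by split => //; apply: (F0' _ _ hn hm e2).
- by split => //; apply: (F1' _ _ hn hm e2).
- exfalso; apply: (F3' _ _ hn hm _ e2); move: e1; rewrite /eps.
  by case: (epsb n); case: (epsb m) => // /eqP.
- exfalso; apply: (F3' _ _ hm hn _ (esym e2)); move: e1; rewrite /eps.
  by case: (epsb n); case: (epsb m) => // /eqP.
- by split => //; apply: (F2' _ _ hn hm e2).
have nm := F1' _ _ hn hm e2; subst m; split => //.
move: e1 d1 d2; rewrite /eps; case: (epsb n);
  case: (odd (i - 3)); case: (odd (i' - 3)); rewrite /=;
  rewrite ?expr0 ?expr1 ?mul1r ?mulN1r ?mulr1 ?mulrN1 ?opprK => e1 d1 d2; lia.
Qed.

Theorem lemma4p10 (r : nat) (hr3 : (3 <= r)%N) (hodd : odd r)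
  (G : finZmodType) (phi : {additive Gamma r -> G}) (phi_bij : bijective phi) :
  exists A : 'I_2 -> 'I_r -> 'I_8 -> G, @is_MRS G r 8 2 A 0 0.
Proof.
have hr0 : (0 < r)%N by lia.
exists (fun k i j => phi (Emb r (Xn k i j))).
split; [|split].
- apply: inj_card_bij.
    move=> [[k i] j] [[k' i'] j'] /= /(bij_inj phi_bij) E.
    have := EmbI r _ _ hr3 hodd (Yn_bound (8 * k + j) i r hodd hr3 (ltn_ord i))
                 (Yn_bound (8 * k' + j') i' r hodd hr3 (ltn_ord i')) E.
    have hn : (8 * k + j < 16)%N by have := ltn_ord k; have := ltn_ord j; lia.
    have hm : (8 * k' + j' < 16)%N by have := ltn_ord k'; have := ltn_ord j'; lia.
    move=> /(YnI _ _ _ _ hn hm) [ekj ei].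
    have ek : k = k' by apply: ord_inj; move: ekj; have := ltn_ord j; have := ltn_ord j'; lia.
    have ej : j = j' by apply: ord_inj; move: ekj; have := ltn_ord j; have := ltn_ord j'; lia.
    have ei' : i = i' by apply: ord_inj.
    by rewrite ek ej ei'.
  rewrite -(bij_eq_card phi_bij) !card_prod !card_ord.
  rewrite Zp_cast; last by lia.
  have -> : Zp_trunc 2 = 0%N by []. lia.
- move=> k i; rewrite -raddf_sum -Emb_sum // row_sum ?Emb0 ?raddf0 //.
- move=> k j; rewrite -raddf_sum -Emb_sum // col_sum ?Emb0 ?raddf0 //.
Qed.
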